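(* Let $b:\omega\to(\omega+1)\smallsetminus\{0\}$ and $h\in\omega^\omega$ satisfy $\lim_{i\to\infty}h(i)/b(i)=0$ (reading $h(i)/b(i)$ as $0$ when $b(i)=\omega$), and let $D$ be a non-principal ultrafilter on $\omega$. If $G$ is $\mathbb{E}^h_b$-generic over $V$, then in $V[G]$ there is an ultrafilter $D^*$ on $\mathcal{P}(\omega)\cap V[G]$ extending $D$ such that for every $(s,m)\in\mathrm{seq}_{<\omega}(b)\times\omega$ and every sequence $\bar p=\langle p_n:n<\omega\rangle\in V$ of members of $\mathbb{E}^h_b(s,m)$ whose $D$-limit belongs to $G$, the set $\{n<\omega:p_n\in G\}$ belongs to $D^*$. In particular, $\mathbb{E}^h_b$ is $\sigma$-uf-linked.
   Context: $\mathrm{seq}_{<\omega}(b)=\bigcup_{n<\omega}\prod_{i<n}b(i)$; for $g\in\omega^\omega$, $\mathcal{S}(b,g)=\prod_{i<\omega}[b(i)]^{\le g(i)}$. The poset $\mathbb{E}^h_b$ consists of pairs $p=(s,\varphi)$ for which there is $m<\omega$ with $s\in\mathrm{seq}_{<\omega}(b)$, $\varphi\in\mathcal{S}(b,m\cdot h)$ and $m\cdot h(i)<b(i)$ for all $i\ge|s|$; let $m_p$ be the least such $m$. The order: $(t,\psi)\le(s,\varphi)$ iff $s\subseteq t$, $\varphi(i)\subseteq\psi(i)$ for all $i$, and $t(i)\notin\varphi(i)$ for all $i\in|t|\smallsetminus|s|$. $\mathbb{E}^h_b(s,m)=\{(t,\varphi)\in\mathbb{E}^h_b:t=s,\ m_{(t,\varphi)}\le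 m\}$. If $p_n=(s,\varphi_n)\in\mathbb{E}^h_b(s,m)$ for all $n$, the $D$-limit of $\langle p_n\rangle$ is $(s,\varphi)$ where $k\in\varphi(i)$ iff $\{n:k\in\varphi_n(i)\}\in D$. A subset $Q$ of a poset $\mathbb{P}$ is uf-linked if for every non-principal ultrafilter $D'$ on $\omega$ and every sequence $\langle p_n\rangle$ in $Q$ some $q\in\mathbb{P}$ forces $\{n:p_n\in\dot G\}$ to meet every member of $D'$; $\mathbb{P}$ is $\sigma$-uf-linked if it is a countable union of uf-linked sets. *)

(* Defs.v *)
From mathcomp Require Import all_boot.
Unset Printing Implicit Defensive.

(* b : omega -> (omega+1)\{0} is encoded as nat -> option nat, None = omega. *)
Definition below (x : option nat) (k : nat) : Prop :=
  match x with None => True | Some n => k < n end.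

(* lim_{i->oo} h(i)/b(i) = 0, with h(i)/b(i) read as 0 when b(i) = omega:
   for every k >= 1, eventually h(i)/b(i) < 1/k, i.e. k*h(i) < b(i). *)
Definition ratio_to_zero (h : nat -> nat) (b : nat -> option nat) : Prop :=
  forall k, 0 < k -> exists N, forall i, N <= i -> below (b i) (k * h i).

Definition nset := nat -> Prop.

Definition is_ultrafilter (D : nset -> Prop) : Prop :=
  [/\ ~ D (fun _ => False),
      D (fun _ => True),
      (forall A B : nset, D A -> (forall n, A n -> B n) -> D B),
      (forall A B : nset, D A -> D B -> D (fun n => A n /\ B n)) &
      (forall A : nset, D A \/ D (fun n => ~ A n))].

Definition non_principal (D : nset -> Prop) : Prop :=
  forall m, ~ D (fun n => n = m).

Definition in_seqb (b : nat -> option nat) (s : seq nat) : Prop :=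
  forall i, i < size s -> below (b i) (nth 0 s i).

Definition in_Sbg (b : nat -> option nat) (g : nat -> nat) (phi : nat -> nset) : Prop :=
  forall i, (forall k, phi i k -> below (b i) k) /\
            exists l : seq nat, size l <= g i /\ forall k, phi i k -> k \in l.

Definition cond := (seq nat * (nat -> nset))%type.

Definition cond_wit (b : nat -> option nat) (h : nat -> nat) (p : cond) (m : nat) : Prop :=
  [/\ in_seqb b p.1, in_Sbg b (fun i => m * h i) p.2 &
      forall i, size p.1 <= i -> below (b i) (m * h i)].

Definition isCond (b : nat -> option nat) (h : nat -> nat) (p : cond) : Prop := exists m, cond_wit b h p m.

Definition leE (q p : cond) : Prop :=
  [/\ prefix p.1 q.1,
      (forall i k, p.2 i k -> q.2 i k) &
      forall i, size p.1 <= i < size q.1 -> ~ p.2 i (nth 0 q.1 i)].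

(* E^h_b(s,m): first coordinate s and m_p <= m (m_p the least witness) *)
Definition inEsm (b : nat -> option nat) (h : nat -> nat) (s : seq nat) (m : nat) (p : cond) : Prop :=
  p.1 = s /\ exists m', m' <= m /\ cond_wit b h p m'.

Definition Dlim (D : nset -> Prop) (s : seq nat) (p : nat -> cond) : cond :=
  (s, fun i k => D (fun n => (p n).2 i k)).

(* Forcing over the ground model, unfolded combinatorially. *)
Definition compatE (b : nat -> option nat) (h : nat -> nat) (p q : cond) : Prop :=
  exists r, isCond b h r /\ leE r p /\ leE r q.

(* q forces "x is in the generic": every extension of q is compatible with x *)
Definition forces_inG (b : nat -> option nat) (h : nat -> nat) (q x : cond) : Prop :=
  forall r, isCond b h r -> leE r q -> compatE b h r x.

(* q forces "exists n in A with p^j_n in G for all j in the list":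
   the set of such witnesses is dense below q. *)
Definition forces_meet (b : nat -> option nat) (h : nat -> nat) (q : cond) (A : nset) (ps : seq (nat -> cond)) : Prop :=
  forall r, isCond b h r -> leE r q ->
    exists r', [/\ isCond b h r', leE r' r &
      exists n, A n /\ forall j, j < size ps -> leE r' (nth (fun _ => r') ps j n)].

Definition uf_linked (b : nat -> option nat) (h : nat -> nat) (Q : cond -> Prop) : Prop :=
  forall D' : nset -> Prop, is_ultrafilter D' -> non_principal D' ->
  forall p : nat -> cond, (forall n, Q (p n)) ->
  exists q, isCond b h q /\ forall A, D' A -> forces_meet b h q A [:: p].

Definition sigma_uf_linked (b : nat -> option nat) (h : nat -> nat) : Prop :=
  exists Q : nat -> cond -> Prop,
    (forall p, isCond b h p <-> exists k, Q k p) /\ forall k, uf_linked b h (Q k).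

(* Main.v *)
Require Import Defs.
From mathcomp Require Import all_boot zify.
From Stdlib Require Import Classical.
Set Implicit Arguments.

Section U.
Variable D : nset -> Prop.
Hypothesis HD : is_ultrafilter D.

Lemma D_up {A B : nset} : D A -> (forall n, A n -> B n) -> D B.
Proof. by case: HD => _ _ H _ _; apply: H. Qed.
Lemma D_cap {A B : nset} : D A -> D B -> D (fun n => A n /\ B n).
Proof. by case: HD => _ _ _ H _; apply: H. Qed.
Lemma D_T : D (fun _ => True).
Proof. by case: HD. Qed.
Lemma D_ne {A : nset} : D A -> exists n, A n.
Proof.
move=> DA; apply: NNPP => Hn; have H0 : ~ D (fun _ => False) by case: HD.
apply: H0; apply: (D_up DA) => n An; apply: Hn; by exists n.
Qed.
Lemma D_compl {A : nset} : ~ D A -> D (fun n => ~ A n).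
Proof. by case: HD => _ _ _ _ H; case: (H A). Qed.
Lemma D_fin (P : nat -> nset) K : (forall k, k < K -> D (P k)) ->
  D (fun n => forall k, k < K -> P k n).
Proof.
elim: K => [|K IH] H.
  by apply: (D_up D_T) => n _ k.
have := D_cap (IH (fun k hk => H k (ltnW hk))) (H K (ltnSn K)).
move=> HH; apply: (D_up HH) => n [H1 H2] k; rewrite ltnS leq_eqVlt => /orP[/eqP->//|]; exact: H1.
Qed.
End U.

Lemma leE_refl p : leE p p.
Proof. split => //; [exact: prefix_refl| move=> i /andP[H1 H2]; lia]. Qed.

Lemma prefix_nth {s t : seq nat} {i} : prefix s t -> i < size s -> nth 0 t i = nth 0 s i.
Proof. by move=> /prefixP[u ->] Hi; rewrite nth_cat Hi. Qed.

Lemma prefix_size {s t : seq nat} : prefix s t -> size s <= size t.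
Proof. by move=> /prefixP[u ->]; rewrite size_cat leq_addr. Qed.

Lemma leE_trans a b c : leE c b -> leE b a -> leE c a.
Proof.
case=> Hp1 Hs1 Hn1 [Hp2 Hs2 Hn2]; split.
- exact: prefix_trans Hp2 Hp1.
- by move=> i k /Hs2 /Hs1.
- move=> i /andP[Hi1 Hi2].
  case: (ltnP i (size b.1)) => Hib.
  + rewrite (prefix_nth Hp1 Hib); apply: Hn2; by rewrite Hi1 Hib.
  + move=> Ha; apply: (Hn1 i); first by rewrite Hib Hi2.
    exact: Hs2.
Qed.

Lemma below_mono x k k' : k' <= k -> below x k -> below x k'.
Proof. case: x => //= n; lia. Qed.

Lemma fresh_small (l : seq nat) : exists x, x <= size l /\ x \notin l.
Proof.
apply: NNPP => H.
have Hs : {subset iota 0 (size l).+1 <= l}.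
  move=> x; rewrite mem_iota add0n ltnS => Hx; apply: NNPP => Hn; apply: H.
  exists x; split => //; by apply/negP.
have := uniq_leq_size (iota_uniq 0 (size l).+1) Hs; by rewrite size_iota ltnn.
Qed.

Lemma extend_k b h t (psi : nat -> nset) mr k : cond_wit b h (t,psi) mr ->
  exists t', [/\ prefix t t', size t' = size t + k, in_seqb b t' &
     forall i, size t <= i < size t' -> ~ psi i (nth 0 t' i)].
Proof.
case=> /= Hs HS Hb.
elim: k => [|k [t' [Hp Hsz Hs' Hn]]].
  exists t; split => //; [exact: prefix_refl|by rewrite addn0| move=> i; lia].
have [Hsub [l [Hl Hlin]]] := HS (size t').
have [x [Hx Hxl]] := fresh_small l.
exists (rcons t' x); split.
- exact: prefix_trans Hp (prefix_rcons _ _).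
- by rewrite size_rcons Hsz addnS.
- move=> i; rewrite size_rcons nth_rcons ltnS leq_eqVlt => /orP[/eqP->|Hi].
    rewrite ltnn eqxx; apply: below_mono (Hb _ _); first exact: leq_trans Hx Hl.
    by rewrite Hsz leq_addr.
  by rewrite Hi; apply: Hs'.
- move=> i; rewrite size_rcons nth_rcons => /andP[Hi1]; rewrite ltnS leq_eqVlt => /orP[/eqP->|Hi].
    rewrite ltnn eqxx => /Hlin; by apply/negP.
  rewrite Hi; apply: Hn; by rewrite Hi1.
Qed.

Lemma extend b h t (psi : nat -> nset) mr N : cond_wit b h (t,psi) mr ->
  exists t', [/\ prefix t t', N <= size t', cond_wit b h (t',psi) mr & leE (t',psi) (t,psi)].
Proof.
move=> W; have [t' [Hp Hsz Hs' Hn]] := extend_k N W.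
case: W => /= _ HS Hb.
exists t'; split => //.
- by rewrite Hsz leq_addl.
- split => //= i Hi; apply: Hb; rewrite Hsz in Hi; lia.
Qed.

Fixpoint msum (g : nat -> nat) K := if K is K'.+1 then msum g K' + g K' else 0.

Lemma unionlist K (F : nat -> nset) (g : nat -> nat) :
  (forall j, j < K -> exists l : seq nat, size l <= g j /\ forall k, F j k -> k \in l) ->
  exists L : seq nat, size L <= msum g K /\ forall k, (exists j, j < K /\ F j k) -> k \in L.
Proof.
elim: K => [|K IH] H.
  by exists [::]; split => // k [j []].
have [L [HL HLin]] := IH (fun j hj => H j (ltnW hj)).
have [l [Hl Hlin]] := H K (ltnSn K).
exists (L ++ l); split.
  by rewrite size_cat /=; apply: leq_add.
move=> k [j [Hj Fk]]; rewrite mem_cat; apply/orP.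
move: Hj; rewrite ltnS leq_eqVlt => /orP[/eqP Ej|Hj].
  by right; apply: Hlin; rewrite -Ej.
by left; apply: HLin; exists j.
Qed.

Lemma chain b h q r (xs : nat -> cond) K : isCond b h r -> leE r q ->
  (forall j, j < K -> forces_inG b h q (xs j)) ->
  exists r', [/\ isCond b h r', leE r' r & forall j, j < K -> leE r' (xs j)].
Proof.
move=> Hr Hrq; elim: K => [|K IH] H.
  by exists r; split => //; exact: leE_refl.
have [r1 [Hr1 Hr1r Hr1x]] := IH (fun j hj => H j (ltnW hj)).
have [r2 [Hr2 [Hr21 Hr2x]]] := H K (ltnSn K) r1 Hr1 (leE_trans Hr1r Hrq).
exists r2; split => //.
  exact: leE_trans Hr21 Hr1r.
move=> j; rewrite ltnS leq_eqVlt => /orP[/eqP->//|Hj].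
exact: leE_trans Hr21 (Hr1x j Hj).
Qed.

Lemma core b h D (HD : is_ultrafilter D) (Hrat : ratio_to_zero h b) q A
  (data : seq (seq nat * nat * (nat -> cond))) :
  D A ->
  (forall j, j < size data -> let d := nth ([::], 0, fun _ => q) data j in
     (forall n, inEsm b h d.1.1 d.1.2 (d.2 n)) /\ forces_inG b h q (Dlim D d.1.1 d.2)) ->
  forces_meet b h q A [seq d.2 | d <- data].
Proof.
move=> DA Hdata r Hrc Hrq.
pose dj j := nth ([::], 0, fun _ => q) data j.
have [r1 [Hr1c Hr1r Hr1x]] := @chain b h q r (fun j => Dlim D (dj j).1.1 (dj j).2) (size data)
   Hrc Hrq (fun j hj => (Hdata j hj).2).
case: r1 Hr1c Hr1r Hr1x => t psi [mr Wr] Hr1r Hr1x.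
pose M := mr + msum (fun j => (dj j).1.2) (size data).
have [N HN] := Hrat M.+1 (ltn0Sn _).
have [t' [Hp Hsz Wt' Hle]] := extend N Wr.
pose B n := A n /\ forall j, j < size data -> forall i, i < size t' ->
   size (dj j).1.1 <= i -> ~ ((dj j).2 n).2 i (nth 0 t' i).
have DB : D B.
  apply: D_cap => //.
  apply: (D_fin HD) => j hj.
  apply: (D_fin HD) => i hi.
  case: (leqP (size (dj j).1.1) i) => Hi.
    have := leE_trans Hle (Hr1x j hj); case=> _ _ /(_ i) /=.
    rewrite Hi hi => /(_ isT) /= Hn; simpl.
    by apply: (D_up HD (D_compl HD Hn)) => n Hn' _.
  by apply: (D_up HD (D_T HD)) => n _.
have [n [An Bn]] := D_ne HD DB.
pose r' : cond := (t', fun i k => psi i k \/ exists j, j < size data /\ ((dj j).2 n).2 i k).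
have Hw : forall j, j < size data -> exists m', m' <= (dj j).1.2 /\ cond_wit b h ((dj j).2 n) m'.
  by move=> j hj; have [_ Hm] := (Hdata j hj).1 n.
exists r'; split.
- exists M; split => //=.
  + by case: Wt'.
  + move=> i; split.
      move=> k [Hk|[j [hj Hk]]].
        by case: Wr => _ /(_ i) [H _] _; apply: H.
      have [m' [_ [_ /(_ i) [H _] _]]] := Hw j hj; by apply: H.
    have [lr [Hlr Hlrin]] : exists l : seq nat, size l <= mr * h i /\ forall k, psi i k -> k \in l.
      by case: Wr => _ /(_ i) [_ H] _; case: H => l [Hl Hl']; exists l.
    have Hls : forall j, j < size data -> exists l : seq nat,
        size l <= (dj j).1.2 * h i /\ forall k, ((dj j).2 n).2 i k -> k \in l.
      move=> j hj; have [m' [Hm' [_ /(_ i) [_ [l [Hl Hlin]]] _]]] := Hw j hj.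
      exists l; split => //; apply: leq_trans Hl _; exact: leq_mul.
    have [L [HL HLin]] := @unionlist (size data) (fun j k => ((dj j).2 n).2 i k)
        (fun j => (dj j).1.2 * h i) Hls.
    exists (lr ++ L); split.
      rewrite size_cat /M mulnDl; apply: leq_add => //.
      apply: leq_trans HL _.
      elim: (size data) => [|K IH] //=.
      by rewrite mulnDl leq_add.
    move=> k [Hk|Hk]; rewrite mem_cat; apply/orP; [left; exact: Hlrin | right; exact: HLin].
  + move=> i Hi; apply: (@below_mono _ (M.+1 * h i)); first by rewrite mulSn leq_addl.
    apply: HN; exact: leq_trans Hsz Hi.
- apply: leE_trans Hr1r; apply: leE_trans Hle.
  split => //=; [exact: prefix_refl | by move=> i k Hk; left | move=> i; lia].
- exists n; split => // j; rewrite size_map => hj.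
  rewrite (nth_map ([::], 0, fun _ => q)) //.
  have [Hs1 _] := (Hdata j hj).1 n.
  case: (Hr1x j hj) => /= Hpj _ _.
  split.
  + rewrite Hs1; exact: prefix_trans Hpj Hp.
  + by move=> i k Hk; right; exists j.
  + move=> i /andP[Hi1 Hi2]; rewrite Hs1 in Hi1; exact: Bn j hj i Hi2 Hi1.
Qed.

Lemma lim_size D (HD : is_ultrafilter D) M : forall (X : nset) (F : nat -> nset), D X ->
  (forall n, X n -> exists l : seq nat, size l <= M /\ forall k, F n k -> k \in l) ->
  exists l : seq nat, size l <= M /\ forall k, D (fun n => F n k) -> k \in l.
Proof.
elim: M => [|M IH] X F DX HF.
  exists [::]; split => // k Dk; exfalso.
  have [n [Xn Fn]] := D_ne HD (D_cap HD DX Dk).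
  by have [l [Hl Hlin]] := HF n Xn; move: (Hlin k Fn); case: l Hl Hlin.
case: (classic (exists k0, D (fun n => F n k0))) => [[k0 Dk0]|Hno]; last first.
  exists [::]; split => // k Dk; exfalso; apply: Hno; by exists k.
have HF' : forall n, X n -> exists l : seq nat, size l <= M /\
    forall k, (F n k0 /\ F n k /\ k <> k0) -> k \in l.
  move=> n Xn; case: (classic (F n k0)) => Hk0.
    have [l [Hl Hlin]] := HF n Xn.
    have k0l := Hlin _ Hk0.
    exists (rem k0 l); split.
      by rewrite size_rem //; move: Hl; case: (size l).
    move=> k [_ [Fk Hne]]; apply: rem_mem; first by apply/eqP.
    exact: Hlin.
  by exists [::]; split => // k [].
have [l' [Hl' Hl'in]] := IH X (fun n k => F n k0 /\ F n k /\ k <> k0) DX HF'.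
exists (k0 :: l'); split => // k Dk.
rewrite inE; case: (eqVneq k k0) => //= Hne.
apply: Hl'in; apply: (D_up HD (D_cap HD Dk0 Dk)) => n [H1 H2]; split => //; split => //.
by apply/eqP.
Qed.

Lemma pick_witness D (HD : is_ultrafilter D) m (P : nat -> nset) :
  (forall n, exists c, c <= m /\ P c n) -> exists c, c <= m /\ D (P c).
Proof.
move=> H; apply: NNPP => Hno.
have Dall := D_fin HD (fun c n => ~ P c n) m.+1 (fun c hc => D_compl HD (fun Dc => Hno (ex_intro _ c (conj hc Dc)))).
have [n Hn] := D_ne HD Dall.
have [c [hc Pc]] := H n.
exact: Hn c hc Pc.
Qed.

Lemma Dlim_cond b h D (HD : is_ultrafilter D) s m (p : nat -> cond) :
  (forall n, inEsm b h s m (p n)) -> isCond b h (Dlim D s p).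
Proof.
move=> Hp.
have [c [hc DX]] := @pick_witness D HD m (fun c n => cond_wit b h (p n) c)
  (fun n => let: conj _ (ex_intro m' (conj a b)) := Hp n in ex_intro _ m' (conj a b)).
have [n0 W0] := D_ne HD DX.
have [E0 _] := Hp n0.
exists c; split => /=.
- by case: W0; rewrite E0.
- move=> i; split.
    move=> k Dk; have [n Fn] := D_ne HD Dk.
    have [_ [m' [_ [_ /(_ i) [H _] _]]]] := Hp n; exact: H.
  apply: (@lim_size D HD (c * h i) _ (fun n => (p n).2 i) DX) => n [_ /(_ i) [_ Hl] _]; exact: Hl.
- by case: W0; rewrite E0.
Qed.
Unset Implicit Arguments.

Theorem lemma3p8 (b : nat -> option nat) (h : nat -> nat) (D : nset -> Prop) :
  (forall i, b i <> Some 0) ->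
  ratio_to_zero h b ->
  is_ultrafilter D -> non_principal D ->
  (* "1 forces: D u {{n : p_n in G} : pbar as below} has the f.i.p." *)
  (forall (q : cond) (A : nset)
          (data : seq (seq nat * nat * (nat -> cond))),
     isCond b h q -> D A ->
     (forall j, j < size data -> let d := nth ([::], 0, fun _ => q) data j in
        (forall n, inEsm b h d.1.1 d.1.2 (d.2 n)) /\
        isCond b h (Dlim D d.1.1 d.2) /\
        forces_inG b h q (Dlim D d.1.1 d.2)) ->
     forces_meet b h q A [seq d.2 | d <- data]) /\
  sigma_uf_linked b h.
Proof.
move=> _ Hrat HD _; split.
  move=> q A data _ DA H; apply: (@core b h D HD Hrat q A data DA) => j hj.
  by have [H1 [_ H3]] := H j hj.
exists (fun k p => match @unpickle (seq nat * nat)%type k with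
                   | Some (s, m) => inEsm b h s m p | None => False end).
split.
  move=> p; split.
    move=> [m W]; exists (pickle (p.1, m)); rewrite pickleK.
    by split => //; exists m.
  move=> [k]; case: (@unpickle (seq nat * nat)%type k) => [[s m]|] //.
  by move=> [_ [m' [_ W]]]; exists m'.
move=> k D' HD' _ p Hp.
move: Hp; case: (@unpickle (seq nat * nat)%type k) => [[s m]|]; last by move/(_ 0).
move=> Hp; exists (Dlim D' s p); split.
  exact: (@Dlim_cond b h D' HD' s m p Hp).
move=> A DA.
have := @core b h D' HD' Hrat (Dlim D' s p) A [:: (s, m, p)] DA.
apply => j; rewrite ltnS leqn0 => /eqP -> /=; split => //.
move=> r Hr Hrq; exists r; split => //; split => //; exact: leE_refl.
Qed.
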